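(* Let $T=(V,E)$ be a tree with $\mathrm{pthin}(T)=2$, and let $\sigma$ be an ordering of $V$ and $S=\{V^0,V^1\}$ a partition of $V$ that are strongly consistent. Let $v_1,v_2,v_3,v_4$ be vertices forming a path $v_1v_2v_3v_4$ (with $v_1v_2,v_2v_3,v_3v_4\in E$) whose classes alternate, i.e. $v_1,v_3$ lie in one class and $v_2,v_4$ in the other. Then it is not the case that $v_1<v_3$ and $v_4<v_2$, and it is not the case that $v_3<v_1$ and $v_2<v_4$.
   Context: For a graph $G=(V,E)$, a linear ordering $<$ of $V$ and a partition of $V$ into classes are called strongly consistent if for every triple $r<s<t$ of vertices with $rt\in E$: if $r$ and $s$ belong to the same class then $st\in E$, and if $s$ and $t$ belong to the same class then $rs\in E$. The proper thinness $\mathrm{pthin}(G)$ is the minimum $k$ such that some ordering and some partition into $k$ classes are strongly consistent. *)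

(* Defs.v *)
From mathcomp Require Import all_boot.
Set Implicit Arguments. Unset Strict Implicit. Unset Printing Implicit Defensive.

Definition simple_graph (T : finType) (e : rel T) : Prop :=
  symmetric e /\ irreflexive e.

Definition is_cycle (T : finType) (e : rel T) (x : T) (p : seq T) : bool :=
  [&& path e x p, uniq (x :: p), e (last x p) x & 2 <= size p].

Definition is_tree (T : finType) (e : rel T) : Prop :=
  [/\ simple_graph e, 0 < #|T|,
      (forall x y : T, connect e x y) &
      (forall (x : T) (p : seq T), ~~ is_cycle e x p)].

(* A linear ordering of V is given by an injective position map pos : T -> nat,
   with x < y iff pos x < pos y.  A partition into k classes is a map
   cls : T -> 'I_k (class of each vertex). *)
Definition strongly_consistent (T : finType) (e : rel T) (pos : T -> nat)
  (k : nat) (cls : T -> 'I_k) : Prop :=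
  forall r s t : T, pos r < pos s -> pos s < pos t -> e r t ->
    (cls r = cls s -> e s t) /\ (cls s = cls t -> e r s).

Definition pthin_le (T : finType) (e : rel T) (k : nat) : Prop :=
  exists (pos : T -> nat) (cls : T -> 'I_k),
    injective pos /\ strongly_consistent e pos cls.

Definition pthin_eq (T : finType) (e : rel T) (k : nat) : Prop :=
  pthin_le e k /\ forall k', pthin_le e k' -> k <= k'.

(* Main.v *)
Require Import Defs.
From mathcomp Require Import all_boot.

Theorem propositionA12 (T : finType) (e : rel T)
  (Htree : is_tree e) (Hpthin : pthin_eq e 2)
  (pos : T -> nat) (cls : T -> 'I_2)
  (Hpos : injective pos) (Hsc : strongly_consistent e pos cls)
  (v1 v2 v3 v4 : T)
  (e12 : e v1 v2) (e23 : e v2 v3) (e34 : e v3 v4)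
  (c13 : cls v1 = cls v3) (c24 : cls v2 = cls v4) (c12 : cls v1 != cls v2) :
  ~ (pos v1 < pos v3 /\ pos v4 < pos v2) /\
  ~ (pos v3 < pos v1 /\ pos v2 < pos v4).
Proof.
case: Htree => [[Hsym Hirr] _ _ Hacyc].
have neq : forall x y, e x y -> x != y.
  move=> x y Hxy; apply/eqP => Exy; subst y; by rewrite Hirr in Hxy.
have n14 : v1 != v4.
  apply/eqP => E; subst v4; by rewrite c24 eqxx in c12.
have p14 : pos v1 != pos v4.
  apply/eqP => E; move: n14; by rewrite (Hpos _ _ E) eqxx.
have ne14 : v1 != v3 -> v2 != v4 -> ~~ e v1 v4.
  move=> n13 n24; apply/negP => H; apply: (negP (Hacyc v1 [:: v2; v3; v4])).
  rewrite /is_cycle /= e12 e23 e34 Hsym H /= !inE !negb_or.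
  rewrite (neq _ _ e12) (neq _ _ e23) (neq _ _ e34) n14 /=.
  by rewrite n13 n24.
split.
- case=> H13 H42.
  have {}ne14 := ne14 (contra_neq (@congr1 _ _ pos _ _) (negbT (ltn_eqF H13))) (contra_neq (@congr1 _ _ pos _ _) (negbT (gtn_eqF H42))).
  case: (ltngtP (pos v1) (pos v4)) => H; last by rewrite H eqxx in p14.
  + have [_ /(_ (esym c24)) X] := Hsc _ _ _ H H42 e12.
    by rewrite X in ne14.
  + have [_ /(_ c13) X] := Hsc _ _ _ H H13 (etrans (Hsym _ _) e34).
    by rewrite Hsym X in ne14.
- case=> H31 H24.
  have {}ne14 := ne14 (contra_neq (@congr1 _ _ pos _ _) (negbT (gtn_eqF H31))) (contra_neq (@congr1 _ _ pos _ _) (negbT (ltn_eqF H24))).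
  case: (ltngtP (pos v1) (pos v4)) => H; last by rewrite H eqxx in p14.
  + have [/(_ (esym c13)) X _] := Hsc _ _ _ H31 H e34.
    by rewrite X in ne14.
  + have [/(_ c24) X _] := Hsc _ _ _ H24 H (etrans (Hsym _ _) e12).
    by rewrite Hsym X in ne14.
Qed.
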